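(* Let $(\Re,\oplus,\circ)$ be a commutative Krasner hyperring with identity $1\neq 0$, let $N$ be a proper hyperideal of $\Re$, and let $\phi:L(\Re)\to L(\Re)\cup\{\emptyset\}$ be a function with $\phi(N)\subseteq N$. Then the following are equivalent: (i) $N$ is a $\phi$-prime hyperideal of $\Re$; (ii) for every $a\in\Re- N$, $(N:a)=N\cup(\phi(N):a)$; (iii) for every $a\in\Re- N$, $(N:a)=N$ or $(N:a)=(\phi(N):a)$; (iv) for all hyperideals $K,L$ of $\Re$ with $K\circ L\subseteq N$ and $K\circ L\not\subseteq\phi(N)$, we have $K\subseteq N$ or $L\subseteq N$.
   Context: A commutative Krasner hyperring with identity is $(\Re,\oplus,\circ)$ where $(\Re,\oplus)$ is a canonical hypergroup (the hyperoperation $\oplus:\Re\times\Re\to P^*(\Re)$ is associative and commutative; there is $0$ with $a\oplus 0=\{a\}$; each $a$ has a unique $-a$ with $0\in a\oplus(-a)$; and $c\in a\oplus b$ implies $b\in c\oplus(-a)$ and $a\in c\oplus(-b)$), $(\Re,\circ)$ is a commutative semigroup with identity $1\neq0$ and $a\circ 0=0$, and $\circ$ distributes over $\oplus$. A hyperideal is a nonempty $N\subseteq\Re$ with $a\oplus(-b)\subseteq N$ and $r\circ a\in N$ for all $a,b\in N$, $r\in\Re$; $L(\Re)$ is the set of hyperideals. For $I\in L(\Re)\cup\{\emptyset\}$ and $a\in\Re$, $(I:a)=\{x\in\Re: x\circ a\in I\}$. For hyperideals $K,L$, $K\circ L$ is the hyperideal generated by $\{k\circ l: k\in K,l\in L\}$.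 ''$x\in N-\phi(N)$'' means $x\in N$ and $x\notin\phi(N)$. A hyperideal $N$ is $\phi$-prime if for all $a,b\in\Re$, $a\circ b\in N-\phi(N)$ implies $a\in N$ or $b\in N$. *)

(* Defs.v *)
Set Implicit Arguments.

(* A commutative Krasner hyperring with identity. The hyperoperation is
   represented as a relation: [hadd a b c] means c \in a (+) b. *)
Record KrasnerHyperring := {
  carrier :> Type;
  hadd : carrier -> carrier -> carrier -> Prop;
  hmul : carrier -> carrier -> carrier;
  hzero : carrier;
  hone : carrier;
  hneg : carrier -> carrier;
  hadd_nonempty : forall a b, exists c, hadd a b c;
  hadd_assoc : forall a b c x,
    (exists y, hadd a b y /\ hadd y c x) <-> (exists y, hadd b c y /\ hadd a y x);
  hadd_comm : forall a b x, hadd a b x <-> hadd b a x;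
  hadd_zero : forall a x, hadd a hzero x <-> x = a;
  hneg_spec : forall a, hadd a (hneg a) hzero;
  hneg_unique : forall a b, hadd a b hzero -> b = hneg a;
  hadd_rev : forall a b c, hadd a b c -> hadd c (hneg a) b /\ hadd c (hneg b) a;
  hmul_assoc : forall a b c, hmul a (hmul b c) = hmul (hmul a b) c;
  hmul_comm : forall a b, hmul a b = hmul b a;
  hmul_one : forall a, hmul hone a = a;
  hone_neq_zero : hone <> hzero;
  hmul_zero : forall a, hmul a hzero = hzero;
  hmul_distr : forall a b c x,
    (exists y, hadd b c y /\ x = hmul a y) <-> hadd (hmul a b) (hmul a c) x
}.

Section Defs.
Variable R : KrasnerHyperring.

Definition subset (A B : R -> Prop) : Prop := forall x, A x -> B x.
Definition set_eq (A B : R -> Prop) : Prop := forall x, A x <-> B x.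

Definition is_hyperideal (N : R -> Prop) : Prop :=
  (exists x, N x) /\
  (forall a b x, N a -> N b -> hadd R a (hneg R b) x -> N x) /\
  (forall r a, N a -> N (hmul R r a)).

Definition is_empty (A : R -> Prop) : Prop := forall x, ~ A x.

Definition proper (N : R -> Prop) : Prop := exists x, ~ N x.

Definition colon (I : R -> Prop) (a : R) : R -> Prop :=
  fun x => I (hmul R x a).

Definition hprod (K L : R -> Prop) : R -> Prop :=
  fun x => forall J, is_hyperideal J ->
    (forall k l, K k -> L l -> J (hmul R k l)) -> J x.

Definition phi_prime (phi : (R -> Prop) -> (R -> Prop)) (N : R -> Prop) : Prop :=
  is_hyperideal N /\
  forall a b, N (hmul R a b) -> ~ phi N (hmul R a b) -> N a \/ N b.

End Defs.

Arguments subset {R} A B.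
Arguments set_eq {R} A B.
Arguments is_hyperideal {R} N.
Arguments is_empty {R} A.
Arguments proper {R} N.
Arguments colon {R} I a _.
Arguments hprod {R} K L _.
Arguments phi_prime {R} phi N.

(* Main.v *)
Require Import Defs.
From Stdlib Require Import Classical.
Set Implicit Arguments.

Section L.
Variable R : KrasnerHyperring.

Lemma neg_neg (y : R) : hneg R (hneg R y) = y.
Proof.
  symmetry. apply hneg_unique. apply hadd_comm. apply hneg_spec.
Qed.

Lemma mul_neg (a b : R) : hmul R a (hneg R b) = hneg R (hmul R a b).
Proof.
  apply hneg_unique. rewrite <- (hmul_zero R a).
  apply (proj1 (hmul_distr R a b (hneg R b) (hmul R a (hzero R)))).
  exists (hzero R). split; [apply hneg_spec | reflexivity].
Qed.

Lemma ideal_zero {I : R -> Prop} : is_hyperideal I -> I (hzero R).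
Proof.
  intros [[x Hx] [Hs _]]. apply (Hs x x); auto. apply hneg_spec.
Qed.

Lemma ideal_neg {I : R -> Prop} {y} : is_hyperideal I -> I y -> I (hneg R y).
Proof.
  intros HI Hy. pose proof (ideal_zero HI) as H0.
  destruct HI as [_ [Hs _]]. apply (Hs (hzero R) y); auto.
  apply hadd_comm. apply hadd_zero. reflexivity.
Qed.

Lemma ideal_add {I : R -> Prop} {x y z} : is_hyperideal I -> I x -> I y ->
  hadd R x y z -> I z.
Proof.
  intros HI Hx Hy Hz. pose proof (ideal_neg HI Hy) as Hny.
  destruct HI as [_ [Hs _]]. apply (Hs x (hneg R y)); auto.
  rewrite neg_neg. exact Hz.
Qed.

Lemma ideal_sub {I : R -> Prop} {x y z} : is_hyperideal I -> I x -> I y ->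
  hadd R x (hneg R y) z -> I z.
Proof. intros [_ [Hs _]]. eauto. Qed.

Lemma ideal_mul (I : R -> Prop) r x : is_hyperideal I -> I x -> I (hmul R r x).
Proof. intros [_ [_ Hm]]. auto. Qed.

Lemma colon_sub {I : R -> Prop} {a x y z} : is_hyperideal I ->
  colon I a x -> colon I a y -> hadd R x (hneg R y) z -> colon I a z.
Proof.
  unfold colon. intros HI Hx Hy Hz.
  rewrite (hmul_comm R z a).
  apply (ideal_sub (x := hmul R a x) (y := hmul R a y)); auto.
  - rewrite hmul_comm; auto.
  - rewrite hmul_comm; auto.
  - rewrite <- mul_neg. apply (proj1 (hmul_distr R a x (hneg R y) _)).
    exists z; auto.
Qed.

Lemma colon_ideal {I : R -> Prop} a : is_hyperideal I -> is_hyperideal (colon I a).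
Proof.
  intros HI. split; [|split].
  - exists (hzero R). unfold colon. rewrite hmul_comm, hmul_zero. apply ideal_zero; auto.
  - intros u v w Hu Hv Hw. exact (colon_sub HI Hu Hv Hw).
  - intros r x Hx. unfold colon in *. rewrite <- hmul_assoc. apply ideal_mul; auto.
Qed.

Lemma princ_ideal (a : R) : is_hyperideal (fun x => exists r, x = hmul R r a).
Proof.
  split; [|split].
  - exists a. exists (hone R). rewrite hmul_one. auto.
  - intros u v x [r Hr] [s Hs] Hx. subst.
    rewrite (hmul_comm R r a), (hmul_comm R s a), <- mul_neg in Hx.
    destruct (proj2 (hmul_distr R a r (hneg R s) x) Hx) as [y [_ Hy]].
    exists y. rewrite hmul_comm; auto.
  - intros r x [s Hs]. subst. exists (hmul R r s). apply hmul_assoc.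
Qed.

Lemma hprod_in (K L : R -> Prop) k l : K k -> L l -> hprod K L (hmul R k l).
Proof. intros Hk Hl J _ HJ. auto. Qed.

End L.

Theorem mainTheorem1 (R : KrasnerHyperring) (N : R -> Prop)
  (phi : (R -> Prop) -> (R -> Prop))
  (Hphi : forall I : R -> Prop, is_hyperideal I -> is_hyperideal (phi I) \/ is_empty (phi I))
  (HN : is_hyperideal N) (HNp : proper N) (HphiN : subset (phi N) N) :
  (phi_prime phi N <->
     (forall a, ~ N a -> set_eq (colon N a) (fun x => N x \/ colon (phi N) a x))) /\
  ((forall a, ~ N a -> set_eq (colon N a) (fun x => N x \/ colon (phi N) a x)) <->
     (forall a, ~ N a -> set_eq (colon N a) N \/ set_eq (colon N a) (colon (phi N) a))) /\
  ((forall a, ~ N a -> set_eq (colon N a) N \/ set_eq (colon N a) (colon (phi N) a)) <->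
     (forall K L, is_hyperideal K -> is_hyperideal L ->
        subset (hprod K L) N -> ~ subset (hprod K L) (phi N) ->
        subset K N \/ subset L N)).
Proof.
  assert (NinC : forall a x, N x -> colon N a x).
  { intros a x Hx. unfold colon. rewrite hmul_comm. apply ideal_mul; auto. }
  assert (PinC : forall a x, colon (phi N) a x -> colon N a x).
  { intros a x Hx. apply HphiN. exact Hx. }
  split; [|split].
  - split.
    + intros [_ Hp] a Ha x. split.
      * intros Hx. destruct (classic (phi N (hmul R x a))) as [H|H].
        -- right. exact H.
        -- left. destruct (Hp x a Hx H); tauto.
      * intros [H|H]; auto.
    + intros H2. split; auto. intros a b Hab Hnp.
      destruct (classic (N a)) as [Ha|Ha]; auto. right.
      destruct (proj1 (H2 a Ha b)) as [Hb|Hb]; auto.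
      * unfold colon. rewrite hmul_comm. auto.
      * exfalso. apply Hnp. unfold colon in Hb. rewrite hmul_comm. exact Hb.
  - split.
    + intros H2 a Ha.
      destruct (Hphi N HN) as [HP|HE].
      2:{ left. intros x. split.
          - intros Hx. destruct (proj1 (H2 a Ha x) Hx) as [H|H]; auto.
            exfalso. apply (HE _ H).
          - apply NinC. }
      destruct (classic (exists x, N x /\ ~ colon (phi N) a x)) as [[x [Hx Hxn]]|Hno].
      * destruct (classic (exists y, colon (phi N) a y /\ ~ N y)) as [[y [Hy Hyn]]|Hno2].
        -- exfalso. destruct (hadd_nonempty R x y) as [z Hz].
           assert (Hzc : colon N a z).
           { apply (ideal_add (colon_ideal a HN) (x := x) (y := y)); auto. }
           destruct (proj1 (H2 a Ha z) Hzc) as [Hz'|Hz'].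
           ++ apply Hyn. apply (ideal_sub HN (x := z) (y := x)); auto.
              apply (hadd_rev R x y z Hz).
           ++ apply Hxn. apply (colon_sub HP (x := z) (y := y)); auto.
              apply (hadd_rev R x y z Hz).
        -- left. intros w. split.
           ++ intros Hw. destruct (proj1 (H2 a Ha w) Hw) as [H|H]; auto.
              apply NNPP. intro Hn. apply Hno2. eauto.
           ++ apply NinC.
      * right. intros w. split.
        -- intros Hw. destruct (proj1 (H2 a Ha w) Hw) as [H|H]; auto.
           apply NNPP. intro Hn. apply Hno. eauto.
        -- apply PinC.
    + intros H3 a Ha x. destruct (H3 a Ha) as [E|E]; split.
      * intros Hx. left. apply E. exact Hx.
      * intros [H|H]; auto.
      * intros Hx. right. apply E. exact Hx.
      * intros [H|H]; auto.
  - split.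
    + intros H3 K L HK HL Hsub Hnsub.
      apply NNPP. intros Hn. apply Hnsub.
      assert (HKn : exists a, K a /\ ~ N a).
      { apply NNPP. intro H. apply Hn. left. intros k Hk. apply NNPP. intro. apply H; eauto. }
      assert (HLn : ~ subset L N) by tauto.
      assert (Hc : forall c l, K c -> ~ N c -> L l -> phi N (hmul R c l)).
      { intros c l Hc Hcn Hl. destruct (H3 c Hcn) as [E|E].
        - exfalso. apply HLn. intros l' Hl'. apply E. unfold colon.
          rewrite hmul_comm. apply Hsub. apply hprod_in; auto.
        - rewrite hmul_comm. apply E. unfold colon. rewrite hmul_comm.
          apply Hsub. apply hprod_in; auto. }
      destruct HKn as [a [Ha Han]].
      destruct HL as [[l0 Hl0] HL'].
      assert (HP : is_hyperideal (phi N)).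
      { destruct (Hphi N HN) as [H|H]; auto. exfalso. apply (H _ (Hc a l0 Ha Han Hl0)). }
      assert (Hall : forall k l, K k -> L l -> phi N (hmul R k l)).
      { intros k l Hk Hl. destruct (classic (N k)) as [Hkn|Hkn]; auto.
        destruct (hadd_nonempty R k a) as [c Hca].
        assert (HcK : K c) by (apply (ideal_add HK (x := k) (y := a)); auto).
        assert (HcN : ~ N c).
        { intro Hcn. apply Han. apply (ideal_sub HN (x := c) (y := k)); auto.
          apply (hadd_rev R k a c Hca). }
        pose proof (proj2 (hadd_rev R k a c Hca)) as Hk'.
        rewrite (hmul_comm R k l).
        apply (ideal_sub HP (x := hmul R l c) (y := hmul R l a)).
        - rewrite hmul_comm. auto.
        - rewrite hmul_comm. auto.
        - rewrite <- mul_neg. apply (proj1 (hmul_distr R l c (hneg R a) _)). eauto. }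
      intros x Hx. apply Hx; auto.
    + intros H4 a Ha.
      destruct (classic (subset (colon N a) N)) as [Hs|Hs].
      * left. intros x; split; auto.
      * right. intros x; split; auto.
        intros Hx.
        assert (Hsub : subset (hprod (colon N a) (fun x => exists r, x = hmul R r a)) N).
        { intros w Hw. apply Hw; auto. intros k l Hk [r Hr]. subst l.
          rewrite hmul_assoc, (hmul_comm R k r), <- hmul_assoc. apply ideal_mul; auto. }
        destruct (classic (subset (hprod (colon N a) (fun x => exists r, x = hmul R r a)) (phi N))) as [Hp|Hp].
        -- apply Hp. apply hprod_in; auto. exists (hone R). rewrite hmul_one; auto.
        -- destruct (H4 _ _ (colon_ideal a HN) (@princ_ideal R a) Hsub Hp) as [H|H].
           ++ contradiction.
           ++ exfalso. apply Ha. apply H. exists (hone R). rewrite hmul_one; auto.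
Qed.
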